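(* Fix $\lambda,\mu,q>0$, $k\ge1$, $b\ge0$ and $\alpha\in(\underline\alpha,1]$, and let $J(\alpha,a,b)$, $\gamma$, $\theta$, $m_\alpha$ be as in the context. Then for $a\in(0,\infty)$, $\frac{\partial}{\partial a}J(\alpha,a,b)=\lambda\frac{\mu}{\alpha}e^{-\frac{\mu}{\alpha}a}\,\frac{-ak\big(q+q\frac{\mu}{\alpha}\theta(b,\alpha)\big)+c(\alpha)\gamma(b,\alpha)+\lambda k\frac{e^{-\frac{\mu}{\alpha}a}-1}{\mu/\alpha}}{\big(q+\frac{\mu q}{\alpha}\theta(b,\alpha)+\lambda e^{-\frac{\mu}{\alpha}a}\big)^2}.$ Consequently: (1) $\lim_{a\to0+}\frac{\partial}{\partial a}J(\alpha,a,b)>0$ and $\frac{\partial}{\partial a}J(\alpha,a,b)<0$ for all sufficiently large $a$, so neither $a=0$ nor $a=\infty$ maximises $a\mapsto J(\alpha,a,b)$; (2) there exists a unique $a_{k,b,\alpha}\in(0,\infty)$ with $\frac{\partial}{\partial a}J(\alpha,a_{k,b,\alpha},b)=0$, equivalently $-a_{k,b,\alpha}k\big(q+q\frac{\mu}{\alpha}\theta(b,\alpha)\big)+c(\alpha)\gamma(b,\alpha)+\lambda k\frac{e^{-\frac{\mu}{\alpha}a_{k,b,\alpha}}-1}{\mu/\alpha}=0,$ and at this point $J(\alpha,a_{k,b,\alpha},b)=k\,a_{k,b,\alpha}$.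
   Context: Let $c(\alpha)=c-(1-\alpha)(1+\eta_2)\lambda\mu$ with $c>0$, $\eta_2>0$, where $\underline\alpha$ is the zero of $c(\cdot)$, so that $c(\alpha)>0$ for $\alpha>\underline\alpha$. For retention $\alpha$, let $\rho_-(\alpha)\le0\le\Phi_q(\alpha)$ be the roots of $\alpha c(\alpha)\theta^2+(c(\alpha)\mu-\alpha\lambda-\alpha q)\theta-\mu q=0$. Define $\gamma(x,\alpha)=\frac{\Phi_q(\alpha)-\rho_-(\alpha)}{\Phi_q(\alpha)e^{\Phi_q(\alpha)x}-\rho_-(\alpha)e^{\rho_-(\alpha)x}}$, $\theta(x,\alpha)=\frac{e^{\Phi_q(\alpha)x}-e^{\rho_-(\alpha)x}}{\Phi_q(\alpha)e^{\Phi_q(\alpha)x}-\rho_-(\alpha)e^{\rho_-(\alpha)x}}$, $m_\alpha(a)=\frac{1-e^{-\frac{\mu}{\alpha}a}(\frac{\mu}{\alpha}a+1)}{\mu/\alpha}$, and $J(\alpha,a,b)=\frac{c(\alpha)\gamma(b,\alpha)-\lambda k\,m_\alpha(a)}{q+\frac{\mu q}{\alpha}\theta(b,\alpha)+\lambda e^{-\frac{\mu}{\alpha}a}}$ (the value at initial reserve $0$ of the policy with retention $\alpha$, injections up to severity $a$ and dividend barrier $b$, for exponential claims with rate $\mu$). *)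

(* Defs.v *)
From Stdlib Require Import Reals Lra.
From Coquelicot Require Import Coquelicot.
Open Scope R_scope.

Definition calpha (c eta2 lam mu al : R) : R := c - (1 - al) * (1 + eta2) * lam * mu.

(* coefficients of  al c(al) th^2 + (c(al) mu - al lam - al q) th - mu q = 0 *)
Definition qA (c eta2 lam mu al : R) : R := al * calpha c eta2 lam mu al.
Definition qB (c eta2 lam mu q al : R) : R :=
  calpha c eta2 lam mu al * mu - al * lam - al * q.
Definition qC (mu q : R) : R := - (mu * q).
Definition qdisc (c eta2 lam mu q al : R) : R :=
  qB c eta2 lam mu q al ^ 2 - 4 * qA c eta2 lam mu al * qC mu q.

Definition Phiq (c eta2 lam mu q al : R) : R :=
  (- qB c eta2 lam mu q al + sqrt (qdisc c eta2 lam mu q al)) / (2 * qA c eta2 lam mu al).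
Definition rhom (c eta2 lam mu q al : R) : R :=
  (- qB c eta2 lam mu q al - sqrt (qdisc c eta2 lam mu q al)) / (2 * qA c eta2 lam mu al).

Definition gam (c eta2 lam mu q x al : R) : R :=
  let P := Phiq c eta2 lam mu q al in
  let r := rhom c eta2 lam mu q al in
  (P - r) / (P * exp (P * x) - r * exp (r * x)).

Definition thet (c eta2 lam mu q x al : R) : R :=
  let P := Phiq c eta2 lam mu q al in
  let r := rhom c eta2 lam mu q al in
  (exp (P * x) - exp (r * x)) / (P * exp (P * x) - r * exp (r * x)).

Definition malpha (mu al a : R) : R :=
  (1 - exp (- (mu / al) * a) * ((mu / al) * a + 1)) / (mu / al).

Definition J (c eta2 lam mu q k al a b : R) : R :=
  (calpha c eta2 lam mu al * gam c eta2 lam mu q b al - lam * k * malpha mu al a)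
  / (q + (mu * q / al) * thet c eta2 lam mu q b al + lam * exp (- (mu / al) * a)).

(* Main.v *)
Require Import Defs.
From Stdlib Require Import Reals Lra.
From Coquelicot Require Import Coquelicot.
Open Scope R_scope.

Lemma gen_der (N0 m Q lam k a : R) : 0 < m -> 0 < Q -> 0 < lam ->
  is_derive (fun a => (N0 - lam * k * ((1 - exp (- m * a) * (m * a + 1)) / m)) / (Q + lam * exp (- m * a))) a
   (lam * m * exp (- m * a) * (- a * k * Q + N0 + lam * k * (exp (- m * a) - 1) / m)
    / (Q + lam * exp (- m * a)) ^ 2).
Proof.
  intros Hm HQ Hl.
  assert (He := exp_pos (- m * a)).
  auto_derive.
  - nra.
  - field. split; nra.
Qed.

Lemma gen_cont (N0 m Q lam k : R) : 0 < m -> 0 < Q -> 0 < lam ->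
  continuous (fun a => lam * m * exp (- m * a) * (- a * k * Q + N0 + lam * k * (exp (- m * a) - 1) / m)
    / (Q + lam * exp (- m * a)) ^ 2) 0.
Proof.
  intros Hm HQ Hl. apply (@ex_derive_continuous R_AbsRing R_NormedModule).
  assert (He := exp_pos (- m * 0)).
  assert (0 < Q + lam * exp (- m * 0)) by nra.
  auto_derive. repeat split; try lra.
  rewrite Rmult_1_r. apply Rgt_not_eq. apply Rmult_lt_0_compat; lra.
Qed.

Theorem lemma4p3 (c eta2 lam mu q k b al : R)
  (Hc : 0 < c) (Heta2 : 0 < eta2) (Hlam : 0 < lam) (Hmu : 0 < mu) (Hq : 0 < q)
  (Hk : 1 <= k) (Hb : 0 <= b)
  (Hal0 : 0 < al) (Hal1 : al <= 1) (Hcal : 0 < calpha c eta2 lam mu al) :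
  let cA := calpha c eta2 lam mu al in
  let gb := gam c eta2 lam mu q b al in
  let tb := thet c eta2 lam mu q b al in
  let Ja := fun a => J c eta2 lam mu q k al a b in
  let num := fun a =>
    - a * k * (q + q * (mu / al) * tb) + cA * gb
    + lam * k * (exp (- (mu / al) * a) - 1) / (mu / al) in
  (* derivative formula *)
  (forall a, 0 < a ->
     is_derive Ja a
       (lam * (mu / al) * exp (- (mu / al) * a) * num a
        / (q + (mu * q / al) * tb + lam * exp (- (mu / al) * a)) ^ 2)) /\
  (* (1) positive right limit at 0, negative for large a *)
  (exists L, 0 < L /\ filterlim (fun a => Derive Ja a) (at_right 0) (locally L)) /\
  (exists A, forall a, A < a -> Derive Ja a < 0) /\
  (* (2) unique critical point, characterized by num = 0, where J = k a *)
  (forall a, 0 < a -> (Derive Ja a = 0 <-> num a = 0)) /\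
  (exists astar, 0 < astar /\ Derive Ja astar = 0 /\ num astar = 0 /\
     (forall a, 0 < a -> Derive Ja a = 0 -> a = astar) /\
     Ja astar = k * astar).
Proof.
  intros cA gb tb Ja num.
  assert (HA : 0 < qA c eta2 lam mu al) by (unfold qA; apply Rmult_lt_0_compat; auto).
  set (B := qB c eta2 lam mu q al) in *.
  set (s := sqrt (qdisc c eta2 lam mu q al)).
  assert (Hd : 0 < qdisc c eta2 lam mu q al).
  { assert (0 < qA c eta2 lam mu al * (mu * q)) by (apply Rmult_lt_0_compat; nra).
    unfold qdisc, qC; fold B. nra. }
  assert (Hs0 : 0 <= s) by apply sqrt_pos.
  assert (Hss : s * s = B ^ 2 + 4 * qA c eta2 lam mu al * (mu * q)).
  { unfold s; rewrite sqrt_sqrt by lra. unfold qdisc, qC; fold B; ring. }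
  assert (0 < qA c eta2 lam mu al * (mu * q)) by (apply Rmult_lt_0_compat; nra).
  assert (Hp1 : 0 < - B + s) by nra.
  assert (Hp2 : - B - s < 0) by nra.
  set (P := Phiq c eta2 lam mu q al).
  set (r := rhom c eta2 lam mu q al).
  assert (HP : 0 < P).
  { unfold P, Phiq; fold B s. apply Rdiv_lt_0_compat; lra. }
  assert (Hr : r < 0).
  { unfold r, rhom; fold B s. unfold Rdiv. apply Rmult_neg_pos; [lra|].
    apply Rinv_0_lt_compat; lra. }
  assert (E1 := exp_pos (P * b)). assert (E2 := exp_pos (r * b)).
  assert (Hle : exp (r * b) <= exp (P * b)).
  { destruct (Req_dec b 0) as [->|]. rewrite !Rmult_0_r; lra.
    left; apply exp_increasing; nra. }
  assert (HDd : 0 < P * exp (P * b) - r * exp (r * b)) by nra.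
  assert (Htb : 0 <= tb).
  { unfold tb, thet; fold P r. apply Rdiv_le_0_compat; lra. }
  assert (Hgb : 0 < gb).
  { unfold gb, gam; fold P r. apply Rdiv_lt_0_compat; lra. }
  set (m := mu / al) in *.
  assert (Hm : 0 < m) by (unfold m; apply Rdiv_lt_0_compat; lra).
  set (Q := q + q * m * tb).
  assert (HQ : 0 < Q) by (unfold Q; assert (0 <= q * m * tb) by (apply Rmult_le_pos; [apply Rmult_le_pos|]; lra); lra).
  assert (EQ : mu * q / al = q * m) by (unfold m; field; lra).
  assert (HN0 : 0 < cA * gb) by (apply Rmult_lt_0_compat; auto).
  set (F := fun a => lam * m * exp (- m * a) * (- a * k * Q + cA * gb + lam * k * (exp (- m * a) - 1) / m)
    / (Q + lam * exp (- m * a)) ^ 2).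
  assert (Hder : forall a, is_derive Ja a (F a)).
  { intro a. unfold Ja, J, malpha. fold cA gb tb m. rewrite EQ.
    replace (q + q * m * tb) with Q by (unfold Q; ring).
    apply gen_der; auto. }
  assert (HDer : forall a, Derive Ja a = F a) by (intro; apply is_derive_unique, Hder).
  assert (Hnum : forall a, num a = - a * k * Q + cA * gb + lam * k * (exp (- m * a) - 1) / m).
  { intro; unfold num, Q; fold m; ring. }
  assert (HF : forall a, F a = lam * m * exp (- m * a) * num a / (Q + lam * exp (- m * a)) ^ 2).
  { intro; unfold F; rewrite Hnum; reflexivity. }
  assert (Hpre : forall a, 0 < lam * m * exp (- m * a) / (Q + lam * exp (- m * a)) ^ 2).
  { intro a. assert (Ea := exp_pos (- m * a)). apply Rdiv_lt_0_compat.
    apply Rmult_lt_0_compat; [nra|auto]. apply pow_lt; nra. }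
  assert (HFs : forall a, F a = (lam * m * exp (- m * a) / (Q + lam * exp (- m * a)) ^ 2) * num a).
  { intro a. rewrite HF. unfold Rdiv. ring. }
  assert (Hnumub : forall a, 0 <= a -> num a <= - a * k * Q + cA * gb).
  { intros a Ha. rewrite Hnum. assert (exp (- m * a) <= 1).
    { rewrite <- exp_0. destruct (Req_dec a 0) as [->|]. rewrite Rmult_0_r; lra.
      left; apply exp_increasing; nra. }
    assert (lam * k * (exp (- m * a) - 1) / m <= 0).
    { assert (0 < lam * k) by nra.
      assert (lam * k * (exp (- m * a) - 1) <= 0) by nra.
      assert (0 < / m) by (apply Rinv_0_lt_compat; auto).
      unfold Rdiv. nra. }
    lra. }
  assert (Hdec : forall a1 a2, a1 < a2 -> num a2 < num a1).
  { intros a1 a2 H12. rewrite !Hnum.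
    assert (exp (- m * a2) < exp (- m * a1)) by (apply exp_increasing; nra).
    assert (lam * k * (exp (- m * a2) - 1) / m <= lam * k * (exp (- m * a1) - 1) / m).
    { assert (0 < lam * k) by nra.
      unfold Rdiv. apply Rmult_le_compat_r. left; apply Rinv_0_lt_compat; auto. nra. }
    assert (0 < (a2 - a1) * (k * Q)) by (apply Rmult_lt_0_compat; nra).
    nra. }
  assert (Hnum0 : num 0 = cA * gb).
  { rewrite Hnum. rewrite Rmult_0_r, exp_0. field. lra. }
  set (A := cA * gb / (k * Q)).
  assert (HA0 : 0 < A) by (unfold A; apply Rdiv_lt_0_compat; nra).
  assert (Hneg : forall a, A < a -> num a < 0).
  { intros a Ha. assert (a * (k * Q) > cA * gb).
    { assert (A * (k*Q) = cA*gb) by (unfold A; field; nra).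
      assert (0 < k*Q) by nra. nra. }
    specialize (Hnumub a ltac:(lra)). nra. }
  assert (Hiff : forall a, Derive Ja a = 0 <-> num a = 0).
  { intro a. rewrite HDer, HFs. specialize (Hpre a). split; intro Hz.
    - destruct (Rmult_integral _ _ Hz); [lra|auto].
    - rewrite Hz; ring. }
  split; [|split; [|split; [|split]]].
  - intros a _. pose proof (Hder a) as Hd1. rewrite HF in Hd1. fold m. rewrite EQ. replace (q * m * tb) with (Q - q) by (unfold Q; ring). replace (q + (Q - q)) with Q by ring. exact Hd1.
  - exists (F 0). split.
    + rewrite HFs, Hnum0. specialize (Hpre 0). nra.
    + apply filterlim_ext_loc with F.
      * exists (mkposreal 1 Rlt_0_1). intros y _ _. symmetry; apply HDer.
      * eapply filterlim_filter_le_1. apply filter_le_within.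
        apply gen_cont; auto.
  - exists A. intros a Ha. rewrite HDer, HFs. specialize (Hpre a). specialize (Hneg a Ha). nra.
  - intros a _; apply Hiff.
  - assert (Hcont : continuity (fun a => - num a)).
    { intro x. apply continuity_pt_filterlim. apply (@ex_derive_continuous R_AbsRing R_NormedModule (fun a => - num a)).
      unfold num. auto_derive. repeat split; auto; lra. }
    destruct (IVT (fun a => - num a) 0 (A + 1) Hcont ltac:(lra)) as [z [Hz Hz0]].
    { simpl. lra. }
    { simpl. specialize (Hneg (A+1) ltac:(lra)). lra. }
    simpl in Hz0.
    assert (Hnz : num z = 0) by lra.
    assert (z <> 0) by (intro; subst; lra).
    exists z. split; [lra|]. split; [apply Hiff; auto|]. split; [auto|]. split.
    + intros a Ha Hda. apply Hiff in Hda.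
      destruct (Rtotal_order a z) as [Hlt|[Hlt|Hlt]]; auto.
      * specialize (Hdec _ _ Hlt). lra.
      * specialize (Hdec _ _ Hlt). lra.
    + unfold Ja, J, malpha. fold cA gb tb m. rewrite EQ.
      rewrite Hnum in Hnz.
      assert (Ez := exp_pos (- m * z)).
      replace (q + q * m * tb) with Q by (unfold Q; ring).
      replace (cA * gb) with (z * k * Q - lam * k * (exp (- m * z) - 1) / m) by lra.
      field. split; [lra|]. assert (0 < lam * exp (- m * z)) by nra. lra.
Qed.
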